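(* Let $\mathsf{K}>0$ and $\omega_{\Delta^n}=\sqrt{-1}\sum_{\alpha=1}^n\frac{2}{\mathsf{K}(1-|z^\alpha|^2)^2}dz^\alpha\wedge dz^{\bar\alpha}$ on $\Delta^n$. Let $u\colon\Delta\to\Delta^n$ be a holomorphic map which is a totally geodesic isometric embedding with respect to some Poincaré metric $\sqrt{-1}\frac{2}{\mathsf{K}'(1-|\zeta|^2)^2}d\zeta\wedge d\bar\zeta$ ($\mathsf{K}'>0$) on $\Delta$ and $\omega_{\Delta^n}$, and put $S=u(\Delta)$. Suppose $\varphi$ is a potential of $\omega_{\Delta^n}$ on an open set $V\subset\Delta^n$ meeting $S$, with $|\partial\varphi|_{\omega_{\Delta^n}}^2\le\mathsf{C}$ on $V$ for some $\mathsf{C}>0$, such that (1) the gradient vector field $\mathcal{V}=\mathrm{grad}(\varphi)$ is tangent to $S$, i.e. $\mathcal{V}(p)\in T^{(1,0)}_pS$ for each $p\in S\cap V$, and (2) $|\partial\varphi|_{\omega_{\Delta^n}}^2\equiv\mathsf{C}$ on $S\cap V$. Then $u$ has full rank $n$, i.e. every component $u^\alpha$ of $u$ is nonconstant.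
   Context: Conventions: $dd^c=\sqrt{-1}\partial\bar\partial$; a potential satisfies $dd^c\varphi=\omega_{\Delta^n}$; the gradient vector field is the $(1,0)$-vector field $\mathcal{V}$ with $\partial\varphi(v)=\langle v,\overline{\mathcal{V}}\rangle_\omega$ for all $(1,0)$-vectors $v$, and $|\partial\varphi|_\omega=|\mathcal{V}|_\omega$. For such a totally geodesic isometric holomorphic disc each component $u^\alpha$ is either constant or an automorphism of $\Delta$; the rank of $u$ is the number of nonconstant components. *)

(* Defs.v *)
From Stdlib Require Import Reals.
From Coquelicot Require Import Coquelicot.
From mathcomp Require Import ssreflect ssrfun ssrbool eqtype ssrnat fintype bigop.
Open Scope R_scope.

Definition Cn (n : nat) := 'I_n -> C.

Definition in_disc (z : C) : Prop := Cmod z < 1.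
Definition in_polydisc {n} (z : Cn n) : Prop := forall a, in_disc (z a).

Definition upd {n} (z : Cn n) (a : 'I_n) (w : C) : Cn n :=
  fun b => if b == a then w else z b.

(* real directions in C^n = R^{2n}: (a,false) = d/dx^a, (a,true) = d/dy^a *)
Definition dir (n : nat) := ('I_n * bool)%type.

Definition shift {n} (z : Cn n) (d : dir n) (t : R) : Cn n :=
  let (a, im) := d in
  upd z a (Cplus (z a) (if im then (0, t) else (t, 0))).

Definition D {n} (d : dir n) (f : Cn n -> R) (z : Cn n) : R :=
  Derive (fun t => f (shift z d t)) 0.

Definition Dx {n} (a : 'I_n) := @D n (a, false).
Definition Dy {n} (a : 'I_n) := @D n (a, true).

Fixpoint Dl {n} (l : list (dir n)) (f : Cn n -> R) : Cn n -> R :=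
  match l with
  | nil => f
  | cons d l' => D d (Dl l' f)
  end.

Definition open_Cn {n} (V : Cn n -> Prop) : Prop :=
  forall z, V z -> exists del, del > 0 /\
    forall w, (forall a, Cmod (Cminus (w a) (z a)) < del) -> V w.

Definition continuous_at_on {n} (V : Cn n -> Prop) (f : Cn n -> R) (z : Cn n) : Prop :=
  forall eps, eps > 0 -> exists del, del > 0 /\
    forall w, V w -> (forall a, Cmod (Cminus (w a) (z a)) < del) ->
      Rabs (f w - f z) < eps.

Definition smooth_on {n} (V : Cn n -> Prop) (f : Cn n -> R) : Prop :=
  forall (l : list (dir n)) z, V z ->
    continuous_at_on V (Dl l f) z /\
    forall d, ex_derive (fun t => Dl l f (shift z d t)) 0.

(* Wirtinger derivative  d phi / d z^a  of a real function *)
Definition dz {n} (a : 'I_n) (phi : Cn n -> R) (z : Cn n) : C :=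
  (Dx a phi z / 2, - Dy a phi z / 2).

(* mixed Wirtinger derivative  d^2 phi / d z^a d zbar^b  of a real function *)
Definition ddbar {n} (a b : 'I_n) (phi : Cn n -> R) (z : Cn n) : C :=
  ((Dx a (Dx b phi) z + Dy a (Dy b phi) z) / 4,
   (Dx a (Dy b phi) z - Dy a (Dx b phi) z) / 4).

(* coefficient g_a of omega_{Delta^n} = sqrt(-1) sum_a g_a dz^a /\ dzbar^a *)
Definition gP (K : R) (w : C) : R := 2 / (K * (1 - Cmod w ^ 2) ^ 2).

(* phi is a potential of omega_{Delta^n} on V:  dd^c phi = omega, i.e.
   phi_{a bbar} = delta_{ab} g_a. *)
Definition is_potential {n} (K : R) (V : Cn n -> Prop) (phi : Cn n -> R) : Prop :=
  smooth_on V phi /\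
  forall z, V z -> forall a b,
    ddbar a b phi z = (if a == b then (gP K (z a), 0) else (0, 0)).

(* gradient vector field: dphi(v) = <v, conj(grad)>_omega, so
   grad^a = conj(phi_a) / g_a *)
Definition grad {n} (K : R) (phi : Cn n -> R) (z : Cn n) : Cn n :=
  fun a => Cmult (Cconj (dz a phi z)) (/ gP K (z a), 0).

Definition norm_dphi2 {n} (K : R) (phi : Cn n -> R) (z : Cn n) : R :=
  \big[Rplus/0]_(a < n) (Cmod (dz a phi z) ^ 2 / gP K (z a)).

Definition holo_disc_map {n} (u : 'I_n -> C -> C) : Prop :=
  forall zeta, in_disc zeta ->
    in_polydisc (fun a => u a zeta) /\ forall a, ex_derive (u a) zeta.

(* u^* omega_{Delta^n} = Poincare metric with curvature constant K' *)
Definition isometric_disc {n} (K K' : R) (u : 'I_n -> C -> C) : Prop :=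
  forall zeta, in_disc zeta ->
    \big[Rplus/0]_(a < n) (gP K (u a zeta) * Cmod (C_derive (u a) zeta) ^ 2)
    = gP K' zeta.

(* vanishing second fundamental form of the holomorphic curve u(Delta):
   the (Chern = Levi-Civita) covariant derivative nabla_{u'} u' of the product
   metric, whose a-th component is u_a'' + Gamma_a(u_a) (u_a')^2 with
   Gamma_a(w) = d log g = 2 conj(w)/(1-|w|^2), is tangent, i.e. a complex
   multiple of u'. *)
Definition totally_geodesic_disc {n} (u : 'I_n -> C -> C) : Prop :=
  forall zeta, in_disc zeta -> exists lam : C, forall a,
    Cplus (C_derive (C_derive (u a)) zeta)
          (Cmult (Cmult (2 / (1 - Cmod (u a zeta) ^ 2), 0) (Cconj (u a zeta)))
                 (Cmult (C_derive (u a) zeta) (C_derive (u a) zeta)))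
    = Cmult lam (C_derive (u a) zeta).

Definition injective_on_disc {n} (u : 'I_n -> C -> C) : Prop :=
  forall z1 z2, in_disc z1 -> in_disc z2 ->
    (fun a => u a z1) = (fun a => u a z2) -> z1 = z2.

Definition tot_geod_isom_embedding {n} (K K' : R) (u : 'I_n -> C -> C) : Prop :=
  holo_disc_map u /\ injective_on_disc u /\
  isometric_disc K K' u /\ totally_geodesic_disc u.

(* Main.v *)
Require Import Defs.
From Stdlib Require Import Reals.
From Coquelicot Require Import Coquelicot.
From mathcomp Require Import ssreflect ssrfun ssrbool eqtype ssrnat fintype bigop.
From Stdlib Require Import Lra FunctionalExtensionality.
From mathcomp Require Import seq.
Open Scope R_scope.

Lemma upd_same n (z : Cn n) a w : upd z a w a = w.
Proof. by rewrite /upd eqxx. Qed.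

Lemma upd_upd n (z : Cn n) a w w' : upd (upd z a w) a w' = upd z a w'.
Proof. apply functional_extensionality => b; rewrite /upd; by case: (b == a). Qed.

Definition sl {n} (p : Cn n) (a0 : 'I_n) (x y : R) : Cn n :=
  upd p a0 (Cplus (p a0) (x, y)).

Lemma sl00 n (p : Cn n) a0 : sl p a0 0 0 = p.
Proof.
apply functional_extensionality => b; rewrite /sl /upd.
case: eqP => [->|//]. rewrite /Cplus /=.
apply injective_projections => /=; ring.
Qed.

Lemma shift_sl_x n (p : Cn n) a0 x y t :
  shift (sl p a0 x y) (a0, false) t = sl p a0 (x + t) y.
Proof.
rewrite /shift /sl upd_same upd_upd. f_equal.
rewrite /Cplus /=. apply injective_projections => /=; ring.
Qed.

Lemma shift_sl_y n (p : Cn n) a0 x y t :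
  shift (sl p a0 x y) (a0, true) t = sl p a0 x (y + t).
Proof.
rewrite /shift /sl upd_same upd_upd. f_equal.
rewrite /Cplus /=. apply injective_projections => /=; ring.
Qed.

Lemma Derive_shift (f : R -> R) x : Derive f x = Derive (fun t => f (x + t)) 0.
Proof.
rewrite /Derive. f_equal.
have E : (fun h => (f (x + (0 + h)) - f (x + 0)) / h) = (fun h => (f (x + h) - f x)/h).
  apply functional_extensionality => h. by rewrite Rplus_0_l Rplus_0_r.
by rewrite E.
Qed.

Lemma is_derive_shift (f : R -> R) x l :
  is_derive (fun t => f (x + t)) 0 l -> is_derive f x l.
Proof.
move=> H.
have Hg : is_derive (fun s : R => s - x) x 1 by auto_derive.
have H' : is_derive (fun t => f (x + t)) (x - x) l by rewrite Rminus_diag.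
have := is_derive_comp (fun t => f (x + t)) (fun s => s - x) x _ _ H' Hg.
have -> : scal (1:R) l = l by apply: scal_one.
move=> H2. apply: (is_derive_ext_loc _ _ _ _ _ H2).
apply: filter_forall => s /=. by rewrite Rplus_minus.
Qed.

Lemma line_x n (V : Cn n -> Prop) phi p a0 l x y :
  smooth_on V phi -> V (sl p a0 x y) ->
  is_derive (fun s => Dl l phi (sl p a0 s y)) x (Dl ((a0,false)::l) phi (sl p a0 x y)).
Proof.
move=> Hs HV. have [_ Hex] := Hs l _ HV.
have H := Derive_correct _ _ (Hex (a0,false)).
apply: is_derive_shift. rewrite /= /D.
apply: (is_derive_ext _ _ _ _ _ H) => t. by rewrite shift_sl_x.
Qed.

Lemma line_y n (V : Cn n -> Prop) phi p a0 l x y :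
  smooth_on V phi -> V (sl p a0 x y) ->
  is_derive (fun s => Dl l phi (sl p a0 x s)) y (Dl ((a0,true)::l) phi (sl p a0 x y)).
Proof.
move=> Hs HV. have [_ Hex] := Hs l _ HV.
have H := Derive_correct _ _ (Hex (a0,true)).
apply: is_derive_shift. rewrite /= /D.
apply: (is_derive_ext _ _ _ _ _ H) => t. by rewrite shift_sl_y.
Qed.

Lemma Dx_sl n (F : Cn n -> R) p a0 x y :
  Defs.D (a0,false) F (sl p a0 x y) = Derive (fun t => F (sl p a0 t y)) x.
Proof.
rewrite /Defs.D (Derive_shift (fun t => F (sl p a0 t y)) x). f_equal.
apply functional_extensionality => t. by rewrite shift_sl_x.
Qed.

Lemma Dy_sl n (F : Cn n -> R) p a0 x y :
  Defs.D (a0,true) F (sl p a0 x y) = Derive (fun t => F (sl p a0 x t)) y.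
Proof.
rewrite /Defs.D (Derive_shift (fun t => F (sl p a0 x t)) y). f_equal.
apply functional_extensionality => t. by rewrite shift_sl_y.
Qed.

Lemma sqrt2_lt2 : sqrt 2 < 2.
Proof.
rewrite -{2}(sqrt_square 2); last lra.
apply: sqrt_lt_1; lra.
Qed.

Lemma cmod_small (w : C) e : Rabs (fst w) < e -> Rabs (snd w) < e -> Cmod w < 2 * e.
Proof.
move=> H1 H2. have := Cmod_2Rmax w.
have Hm : Rmax (Rabs (fst w)) (Rabs (snd w)) < e by apply: Rmax_lub_lt.
have := sqrt2_lt2. have := Rabs_pos (fst w).
have Hm0 : 0 <= Rmax (Rabs (fst w)) (Rabs (snd w)).
  apply: (Rle_trans _ _ _ (Rabs_pos (fst w))); apply Rmax_l.
have := sqrt_pos 2. nra.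
Qed.

Lemma sl_open n (V : Cn n -> Prop) p a0 :
  open_Cn V -> V p -> exists del, del > 0 /\
    forall x y, Rabs x < del -> Rabs y < del -> V (sl p a0 x y).
Proof.
move=> Ho Hp. have [del [Hd H]] := Ho p Hp.
exists (del/2); split; first lra.
move=> x y Hx Hy. apply: H => b. rewrite /sl /upd.
case: eqP => [->|_].
- have -> : Cminus (Cplus (p a0) (x, y)) (p a0) = (x, y).
    rewrite /Cminus /Cplus /=. apply injective_projections => /=; ring.
  have := cmod_small (x,y) (del/2) Hx Hy. lra.
- have -> : Cminus (p b) (p b) = (0,0).
    rewrite /Cminus /Cplus /=. apply injective_projections => /=; ring.
  rewrite Cmod_0. lra.
Qed.

Lemma max2 (g g' : R -> R) L del : del > 0 ->
  (forall t, Rabs t < del -> is_derive g t (g' t)) ->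
  is_derive g' 0 L -> L > 0 ->
  (forall t, Rabs t < del -> g t <= g 0) -> False.
Proof.
move=> Hdel Hd HL HLp Hmax.
have Hdp : forall t, Rabs t < del -> derivable_pt_lim g t (g' t).
  move=> t Ht. by apply/is_derive_Reals; apply: Hd.
have Hcont : forall t, Rabs t < del -> continuity_pt g t.
  move=> t Ht. exact: (derivable_continuous_pt g t (exist _ (g' t) (Hdp t Ht))).
have Hg0 : g' 0 = 0.
  have H0 : Rabs 0 < del by rewrite Rabs_R0.
  have := deriv_maximum g (-del) del 0 (exist _ (g' 0) (Hdp 0 H0)).
  move=> /= -> //; try lra.
  move=> x H1 H2. apply: Hmax. apply: Rabs_def1; lra.
move/is_derive_Reals: HL => HL.
have [dl Hdl] := HL (L/2) ltac:(lra).
have Hpos : forall h, 0 < h -> h < dl -> g' h > 0.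
  move=> h H1 H2. have := Hdl h ltac:(lra) ltac:(rewrite Rabs_right; lra).
  rewrite Rplus_0_l Hg0 Rminus_0_r => Habs.
  have Hq : g' h / h > L/2.
    have := Rabs_def2 _ _ Habs. lra.
  have : g' h = g' h / h * h by field; lra.
  move=> ->. nra.
set t := Rmin del dl / 2.
have Ht0 : 0 < t by rewrite /t; have := Rmin_glb_lt del dl 0 Hdel (cond_pos dl); lra.
have Htd : t < del by rewrite /t; have := Rmin_l del dl; lra.
have Htl : t < dl by rewrite /t; have := Rmin_r del dl; have := cond_pos dl; lra.
have Hin : forall s, 0 <= s <= t -> Rabs s < del.
  move=> s Hs. rewrite Rabs_right; lra.
have [c1 [Hc1 E1]] := MVT_gen g 0 (t/2) g'
  ltac:(move=> x; rewrite Rmin_left ?Rmax_right; try lra; move=> Hx; apply: Hd; apply: Hin; lra)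
  ltac:(move=> x; rewrite Rmin_left ?Rmax_right; try lra; move=> Hx; apply: Hcont; apply: Hin; lra).
have [c2 [Hc2 E2]] := MVT_gen g (t/2) t g'
  ltac:(move=> x; rewrite Rmin_left ?Rmax_right; try lra; move=> Hx; apply: Hd; apply: Hin; lra)
  ltac:(move=> x; rewrite Rmin_left ?Rmax_right; try lra; move=> Hx; apply: Hcont; apply: Hin; lra).
rewrite Rmin_left in Hc1; last lra. rewrite Rmax_right in Hc1; last lra.
rewrite Rmin_left in Hc2; last lra. rewrite Rmax_right in Hc2; last lra.
have Hg1 : g' c1 >= 0.
  case: (Req_dec c1 0) => [->|Hne]; first lra.
  have := Hpos c1 ltac:(lra) ltac:(lra). lra.
have Hg2 : g' c2 > 0 by apply: Hpos; lra.
have := Hmax t ltac:(apply: Hin; lra).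
nra.
Qed.

Definition Wf (K x y e1 e2 t : R) := K * (1 - ((x + t*e1)^2 + (y + t*e2)^2))^2 / 2.
Definition W1f (K x y e1 e2 t : R) :=
  K * (1 - ((x + t*e1)^2 + (y + t*e2)^2)) * (- (2*e1*(x + t*e1) + 2*e2*(y + t*e2))).
Definition W2f (K x y e1 e2 : R) :=
  K * (2*e1*x + 2*e2*y)^2 - K * (1 - (x^2 + y^2)) * (2*e1^2 + 2*e2^2).
Definition Tf (a b K x y e1 e2 t : R) := (a^2 + b^2)/4 * Wf K x y e1 e2 t.
Definition T1f (a b a1 b1 K x y e1 e2 t : R) :=
  (2*a*a1 + 2*b*b1)/4 * Wf K x y e1 e2 t + (a^2 + b^2)/4 * W1f K x y e1 e2 t.
Definition Ef (a b a1 b1 a2 b2 K x y e1 e2 : R) :=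
  (2*a1^2 + 2*a*a2 + 2*b1^2 + 2*b*b2)/4 * Wf K x y e1 e2 0
  + 2*((2*a*a1 + 2*b*b1)/4) * W1f K x y e1 e2 0
  + (a^2 + b^2)/4 * W2f K x y e1 e2.

Lemma term_d1 (al be : R -> R) a1 b1 K x y e1 e2 t :
  is_derive al t a1 -> is_derive be t b1 ->
  is_derive (fun s => Tf (al s) (be s) K x y e1 e2 s) t (T1f (al t) (be t) a1 b1 K x y e1 e2 t).
Proof.
move=> Ha Hb. rewrite /Tf /T1f /Wf /W1f.
auto_derive.
  split; [exists a1; exact Ha|split; [exists b1; exact Hb|done]].
have -> : Derive (fun x => al x) t = a1 by apply: is_derive_unique.
have -> : Derive (fun x => be x) t = b1 by apply: is_derive_unique.
field.
Qed.

Lemma term_d2 (al be al1 be1 : R -> R) a2 b2 K x y e1 e2 :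
  is_derive al 0 (al1 0) -> is_derive be 0 (be1 0) ->
  is_derive al1 0 a2 -> is_derive be1 0 b2 ->
  is_derive (fun t => T1f (al t) (be t) (al1 t) (be1 t) K x y e1 e2 t) 0
    (Ef (al 0) (be 0) (al1 0) (be1 0) a2 b2 K x y e1 e2).
Proof.
move=> Ha Hb Ha1 Hb1. rewrite /T1f /Ef /Wf /W1f /W2f.
auto_derive.
  repeat split; by [exists (al1 0)|exists (be1 0)|exists a2|exists b2].
have -> : Derive (fun x => al x) 0 = al1 0 by apply: is_derive_unique.
have -> : Derive (fun x => be x) 0 = be1 0 by apply: is_derive_unique.
have -> : Derive (fun x => al1 x) 0 = a2 by apply: is_derive_unique.
have -> : Derive (fun x => be1 x) 0 = b2 by apply: is_derive_unique.
field.
Qed.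

Lemma is_derive_big n (F F' : 'I_n -> R -> R) t :
  (forall i, is_derive (F i) t (F' i t)) ->
  is_derive (fun s => \big[Rplus/0]_(i < n) F i s) t (\big[Rplus/0]_(i < n) F' i t).
Proof.
move=> H.
suff: forall r : list 'I_n,
  is_derive (fun s => \big[Rplus/0]_(i <- r) F i s) t (\big[Rplus/0]_(i <- r) F' i t) by [].
elim => [|i r IH].
  rewrite big_nil. apply: (is_derive_ext (fun _ => 0)) => [s|]; first by rewrite big_nil.
  exact: is_derive_const.
rewrite big_cons.
apply: (is_derive_ext (fun s => F i s + \big[Rplus/0]_(j <- r) F j s)) => [s|].
  by rewrite big_cons.
exact: is_derive_plus (H i) IH.
Qed.

Lemma big_Rplus_split n (F G : 'I_n -> R) :
  \big[Rplus/0]_(i < n) (F i + G i) = \big[Rplus/0]_(i < n) F i + \big[Rplus/0]_(i < n) G i.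
Proof.
suff: forall r : list 'I_n, \big[Rplus/0]_(i <- r) (F i + G i) =
  \big[Rplus/0]_(i <- r) F i + \big[Rplus/0]_(i <- r) G i by [].
elim => [|i r IH]; first by rewrite !big_nil; ring.
rewrite !big_cons IH; ring.
Qed.

Lemma big_Rplus_pos n (G : 'I_n -> R) a0 :
  (forall i, 0 <= G i) -> 0 < G a0 -> 0 < \big[Rplus/0]_(i < n) G i.
Proof.
move=> H0 Ha.
suff: forall r : list 'I_n, (0 <= \big[Rplus/0]_(i <- r) G i) /\
   (a0 \in r -> 0 < \big[Rplus/0]_(i <- r) G i).
  move=> /(_ (index_enum 'I_n)) [_ H]. apply: H. by rewrite mem_index_enum.
elim => [|i r [IH1 IH2]]; first by rewrite big_nil; split; [lra|].
rewrite big_cons in_cons. have := H0 i. split; first lra.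
case/orP => [/eqP <-|/IH2]; lra.
Qed.

Lemma div_gP x K y : K <> 0 -> x / (2 / (K * y^2)) = x * (K * y^2 / 2).
Proof.
move=> HK. case: (Req_dec y 0) => [->|Hy].
  have -> : K * 0^2 = 0 by ring.
  rewrite /Rdiv Rinv_0 Rmult_0_r Rinv_0. ring.
field; auto; by apply: pow_nonzero.
Qed.

Lemma norm_line n K phi (l : R -> Cn n) (xx yy e1 e2 : 'I_n -> R) t :
  K <> 0 ->
  (forall b t, Cmod (l t b)^2 = (xx b + t*e1 b)^2 + (yy b + t*e2 b)^2) ->
  norm_dphi2 K phi (l t) = \big[Rplus/0]_(b < n)
    Tf (Dl [::(b,false)] phi (l t)) (Dl [::(b,true)] phi (l t)) K (xx b) (yy b) (e1 b) (e2 b) t.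
Proof.
move=> HK Hc. rewrite /norm_dphi2. apply: eq_bigr => b _.
rewrite Cmod2_alt /dz /gP Hc div_gP // /Tf /Wf /=. rewrite /Defs.Dx /Defs.Dy. field.
Qed.

Lemma dir_contra n K phi (l : R -> Cn n) (xx yy e1 e2 : 'I_n -> R) d del :
  K <> 0 -> del > 0 ->
  (forall b t, Cmod (l t b)^2 = (xx b + t*e1 b)^2 + (yy b + t*e2 b)^2) ->
  (forall ls t, Rabs t < del ->
     is_derive (fun s => Dl ls phi (l s)) t (Dl (d::ls) phi (l t))) ->
  (forall t, Rabs t < del -> norm_dphi2 K phi (l t) <= norm_dphi2 K phi (l 0)) ->
  0 < \big[Rplus/0]_(b < n)
      Ef (Dl [::(b,false)] phi (l 0)) (Dl [::(b,true)] phi (l 0))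
         (Dl [::d;(b,false)] phi (l 0)) (Dl [::d;(b,true)] phi (l 0))
         (Dl [::d;d;(b,false)] phi (l 0)) (Dl [::d;d;(b,true)] phi (l 0))
         K (xx b) (yy b) (e1 b) (e2 b) ->
  False.
Proof.
move=> HK Hdel Hc Hd Hmax Hpos.
pose g' t := \big[Rplus/0]_(b < n)
   T1f (Dl [::(b,false)] phi (l t)) (Dl [::(b,true)] phi (l t))
       (Dl [::d;(b,false)] phi (l t)) (Dl [::d;(b,true)] phi (l t))
       K (xx b) (yy b) (e1 b) (e2 b) t.
apply: (max2 (fun t => norm_dphi2 K phi (l t)) g' _ del Hdel _ _ Hpos Hmax).
- move=> t Ht.
  apply: (is_derive_ext (fun s => \big[Rplus/0]_(b < n)
    Tf (Dl [::(b,false)] phi (l s)) (Dl [::(b,true)] phi (l s)) K (xx b) (yy b) (e1 b) (e2 b) s)).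
    move=> s. by rewrite (norm_line _ _ _ _ _ _ _ _ _ HK Hc).
  apply: (is_derive_big _ (fun b s => Tf (Dl [::(b,false)] phi (l s)) (Dl [::(b,true)] phi (l s)) K (xx b) (yy b) (e1 b) (e2 b) s)
     (fun b t => T1f (Dl [::(b,false)] phi (l t)) (Dl [::(b,true)] phi (l t))
       (Dl [::d;(b,false)] phi (l t)) (Dl [::d;(b,true)] phi (l t))
       K (xx b) (yy b) (e1 b) (e2 b) t)) => b.
  apply: term_d1; exact: Hd.
- have H0 : Rabs 0 < del by rewrite Rabs_R0.
  apply: (is_derive_big _ (fun b t => T1f (Dl [::(b,false)] phi (l t)) (Dl [::(b,true)] phi (l t))
       (Dl [::d;(b,false)] phi (l t)) (Dl [::d;(b,true)] phi (l t))
       K (xx b) (yy b) (e1 b) (e2 b) t)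
    (fun b _ => Ef (Dl [::(b,false)] phi (l 0)) (Dl [::(b,true)] phi (l 0))
         (Dl [::d;(b,false)] phi (l 0)) (Dl [::d;(b,true)] phi (l 0))
         (Dl [::d;d;(b,false)] phi (l 0)) (Dl [::d;d;(b,true)] phi (l 0))
         K (xx b) (yy b) (e1 b) (e2 b))) => b.
  apply: (term_d2 (fun t => Dl [::(b,false)] phi (l t)) (fun t => Dl [::(b,true)] phi (l t))
                  (fun t => Dl [::d;(b,false)] phi (l t)) (fun t => Dl [::d;(b,true)] phi (l t))); exact: Hd.
Qed.

Lemma sl_close n (p : Cn n) a0 u v e b :
  Rabs u < e -> Rabs v < e -> Cmod (Cminus (sl p a0 u v b) (p b)) < 2 * e.
Proof.
move=> Hu Hv. rewrite /sl /upd. case: eqP => [->|_].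
- have -> : Cminus (Cplus (p a0) (u, v)) (p a0) = (u, v).
    rewrite /Cminus /Cplus /=. apply injective_projections => /=; ring.
  exact: cmod_small.
- have -> : Cminus (p b) (p b) = (0,0).
    rewrite /Cminus /Cplus /=. apply injective_projections => /=; ring.
  rewrite Cmod_0. have := Rabs_pos u. lra.
Qed.

Lemma schwarz_sl n (V : Cn n -> Prop) phi p a0 ls :
  smooth_on V phi -> open_Cn V -> V p ->
  Dl ((a0,false)::(a0,true)::ls) phi p = Dl ((a0,true)::(a0,false)::ls) phi p.
Proof.
move=> Hs Ho Hp.
pose f2 u v := Dl ls phi (sl p a0 u v).
have Exy : forall u v, Derive (fun z => Derive (fun t => f2 z t) v) u
   = Dl ((a0,false)::(a0,true)::ls) phi (sl p a0 u v).
  move=> u v. rewrite /= Dx_sl. f_equal. apply functional_extensionality => z.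
  by rewrite Dy_sl.
have Eyx : forall u v, Derive (fun z => Derive (fun t => f2 t z) u) v
   = Dl ((a0,true)::(a0,false)::ls) phi (sl p a0 u v).
  move=> u v. rewrite /= Dy_sl. f_equal. apply functional_extensionality => z.
  by rewrite Dx_sl.
have [del [Hdel HV]] := sl_open n V p a0 Ho Hp.
have Hcont : forall L, continuity_2d_pt (fun u v => Dl L phi (sl p a0 u v)) 0 0.
  move=> L eps. have [Hc _] := Hs L p Hp.
  have [d' [Hd' Hw]] := Hc eps (cond_pos eps).
  have Hm : 0 < Rmin del (d'/2) by apply: Rmin_glb_lt; lra.
  exists (mkposreal _ Hm) => u v /= Hu Hv.
  rewrite Rminus_0_r in Hu. rewrite Rminus_0_r in Hv.
  rewrite sl00. apply: Hw.
    apply: HV; [exact: (Rlt_le_trans _ _ _ Hu (Rmin_l _ _))|exact: (Rlt_le_trans _ _ _ Hv (Rmin_l _ _))].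
  move=> b. have := sl_close n p a0 u v (d'/2) b
    (Rlt_le_trans _ _ _ Hu (Rmin_r _ _)) (Rlt_le_trans _ _ _ Hv (Rmin_r _ _)). lra.
have := Schwarz f2 0 0.
rewrite Exy Eyx sl00. apply.
- exists (mkposreal _ Hdel) => u v /= Hu Hv.
  rewrite Rminus_0_r in Hu. rewrite Rminus_0_r in Hv.
  have HVuv := HV u v Hu Hv.
  split; [|split; [|split]].
  + exists (Dl ((a0,false)::ls) phi (sl p a0 u v)). rewrite /f2; exact: (line_x _ _ _ _ _ _ _ _ Hs HVuv).
  + exists (Dl ((a0,true)::ls) phi (sl p a0 u v)). rewrite /f2; exact: (line_y _ _ _ _ _ _ _ _ Hs HVuv).
  + apply: (ex_derive_ext (fun z => Dl ((a0,true)::ls) phi (sl p a0 z v))).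
      move=> z. by rewrite /= Dy_sl.
    exists (Dl ((a0,false)::(a0,true)::ls) phi (sl p a0 u v)). exact: (line_x _ _ _ _ _ _ _ _ Hs HVuv).
  + apply: (ex_derive_ext (fun z => Dl ((a0,false)::ls) phi (sl p a0 u z))).
      move=> z. by rewrite /= Dx_sl.
    exists (Dl ((a0,true)::(a0,false)::ls) phi (sl p a0 u v)). exact: (line_y _ _ _ _ _ _ _ _ Hs HVuv).
- move=> eps. have [d1 H1] := Hcont ((a0,false)::(a0,true)::ls) eps.
  exists d1 => u v Hu Hv. rewrite !Exy. exact: H1.
- move=> eps. have [d1 H1] := Hcont ((a0,true)::(a0,false)::ls) eps.
  exists d1 => u v Hu Hv. rewrite !Eyx. exact: H1.
Qed.

Lemma eq_deriv_loc (f g : R -> R) del lf lg : del > 0 ->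
  (forall t, Rabs t < del -> f t = g t) -> is_derive f 0 lf -> is_derive g 0 lg -> lf = lg.
Proof.
move=> Hd Heq Hf Hg.
have Hg' : is_derive g 0 lf.
  apply: (is_derive_ext_loc f) => //.
  exists (mkposreal _ Hd) => y /= Hy. apply: Heq.
  move: Hy. rewrite /ball /= /AbsRing_ball /abs /minus /plus /opp /=. by rewrite Ropp_0 Rplus_0_r.
by rewrite -(is_derive_unique _ _ _ Hg') -(is_derive_unique _ _ _ Hg).
Qed.

Lemma harm n (V : Cn n -> Prop) phi p a0 b :
  smooth_on V phi -> open_Cn V -> V p ->
  (forall z, V z -> ddbar a0 b phi z = (0,0)) ->
  Dl [::(a0,false);(a0,false);(b,false)] phi p + Dl [::(a0,true);(a0,true);(b,false)] phi p = 0 /\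
  Dl [::(a0,false);(a0,false);(b,true)] phi p + Dl [::(a0,true);(a0,true);(b,true)] phi p = 0.
Proof.
move=> Hs Ho Hp Hdd.
have CR : forall z, V z ->
  Dl [::(a0,false);(b,false)] phi z + Dl [::(a0,true);(b,true)] phi z = 0 /\
  Dl [::(a0,false);(b,true)] phi z - Dl [::(a0,true);(b,false)] phi z = 0.
  move=> z Hz. have := Hdd z Hz. rewrite /ddbar /Defs.Dx /Defs.Dy /=.
  case => E1 E2. split; lra.
have [del [Hdel HV]] := sl_open n V p a0 Ho Hp.
have H0 : Rabs 0 < del by rewrite Rabs_R0.
have HVx : forall t, Rabs t < del -> V (sl p a0 t 0) by move=> t Ht; apply: HV.
have HVy : forall t, Rabs t < del -> V (sl p a0 0 t) by move=> t Ht; apply: HV.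
have Lx : forall ls, is_derive (fun s => Dl ls phi (sl p a0 s 0)) 0 (Dl ((a0,false)::ls) phi p).
  move=> ls. rewrite -{2}(sl00 n p a0). exact: (line_x _ _ _ _ _ _ _ _ Hs (HVx 0 H0)).
have Ly : forall ls, is_derive (fun s => Dl ls phi (sl p a0 0 s)) 0 (Dl ((a0,true)::ls) phi p).
  move=> ls. rewrite -{2}(sl00 n p a0). exact: (line_y _ _ _ _ _ _ _ _ Hs (HVy 0 H0)).
have E1 : Dl [::(a0,false);(a0,false);(b,false)] phi p = - Dl [::(a0,false);(a0,true);(b,true)] phi p.
  apply: (eq_deriv_loc _ _ del _ _ Hdel _ (Lx [::(a0,false);(b,false)])
            (is_derive_opp _ _ _ (Lx [::(a0,true);(b,true)]))).
  move=> t Ht. have [C1 _] := CR _ (HVx t Ht). rewrite /opp /=; simpl in C1; lra.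
have E2 : Dl [::(a0,true);(a0,true);(b,false)] phi p = Dl [::(a0,true);(a0,false);(b,true)] phi p.
  apply: (eq_deriv_loc _ _ del _ _ Hdel _ (Ly [::(a0,true);(b,false)]) (Ly [::(a0,false);(b,true)])).
  move=> t Ht. have [_ C2] := CR _ (HVy t Ht). lra.
have E3 : Dl [::(a0,false);(a0,false);(b,true)] phi p = Dl [::(a0,false);(a0,true);(b,false)] phi p.
  apply: (eq_deriv_loc _ _ del _ _ Hdel _ (Lx [::(a0,false);(b,true)]) (Lx [::(a0,true);(b,false)])).
  move=> t Ht. have [_ C2] := CR _ (HVx t Ht). lra.
have E4 : Dl [::(a0,true);(a0,true);(b,true)] phi p = - Dl [::(a0,true);(a0,false);(b,false)] phi p.
  apply: (eq_deriv_loc _ _ del _ _ Hdel _ (Ly [::(a0,true);(b,true)])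
            (is_derive_opp _ _ _ (Ly [::(a0,false);(b,false)]))).
  move=> t Ht. have [C1 _] := CR _ (HVy t Ht). rewrite /opp /=; simpl in C1; lra.
have S1 := schwarz_sl n V phi p a0 [::(b,true)] Hs Ho Hp.
have S2 := schwarz_sl n V phi p a0 [::(b,false)] Hs Ho Hp.
split; lra.
Qed.

Lemma combo_other a b a1x b1x a2x b2x a1y b1y a2y b2y K x y :
  a2x + a2y = 0 -> b2x + b2y = 0 -> 0 <= K ->
  0 <= Ef a b a1x b1x a2x b2x K x y 0 0 + Ef a b a1y b1y a2y b2y K x y 0 0.
Proof.
move=> H1 H2 HK.
have -> : Ef a b a1x b1x a2x b2x K x y 0 0 + Ef a b a1y b1y a2y b2y K x y 0 0
  = (2*(a1x^2+b1x^2+a1y^2+b1y^2) + 2*a*(a2x+a2y) + 2*b*(b2x+b2y))/4 * (K*(1-(x^2+y^2))^2/2).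
  rewrite /Ef /Wf /W1f /W2f; field.
rewrite H1 H2. apply: Rmult_le_pos; first nra.
have := pow2_ge_0 (1 - (x^2+y^2)). nra.
Qed.

Lemma combo_self a1x b1x a2x b2x a1y b1y a2y b2y K x y :
  0 < K -> x^2 + y^2 < 1 -> 0 < a1x + b1y ->
  0 < Ef 0 0 a1x b1x a2x b2x K x y 1 0 + Ef 0 0 a1y b1y a2y b2y K x y 0 1.
Proof.
move=> HK Hm Hs.
have -> : Ef 0 0 a1x b1x a2x b2x K x y 1 0 + Ef 0 0 a1y b1y a2y b2y K x y 0 1
  = (2*(a1x^2+b1x^2+a1y^2+b1y^2))/4 * (K*(1-(x^2+y^2))^2/2).
  rewrite /Ef /Wf /W1f /W2f; field.
have Hsq : 0 < (a1x + b1y)^2 by apply: pow_lt.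
have Hd := pow2_ge_0 (a1x - b1y).
have Hq : 0 < a1x^2 + b1y^2 by nra.
have := pow2_ge_0 b1x. have := pow2_ge_0 a1y. move=> H3 H4.
apply: Rmult_lt_0_compat; first nra.
have : 0 < (1 - (x^2+y^2))^2 by apply: pow_lt; lra.
nra.
Qed.

Lemma const_deriv0 (f : C -> C) c z0 :
  in_disc z0 -> (forall zeta, in_disc zeta -> f zeta = c) -> C_derive f z0 = (0,0).
Proof.
move=> Hz Hc. apply: is_C_derive_unique.
apply: (is_derive_ext_loc (fun _ => c)); last exact: is_derive_const.
have He : 0 < (1 - Cmod z0)/4 by rewrite /in_disc in Hz; lra.
exists (mkposreal _ He) => y Hy. symmetry. apply: Hc.
have Hy' : Cmod (Cminus y z0) < (1 - Cmod z0)/4 := Hy.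
have E : y = Cplus z0 (Cminus y z0).
  rewrite /Cminus /Cplus /=. apply injective_projections => /=; ring.
rewrite /in_disc E. apply: (Rle_lt_trans _ _ _ (Cmod_triangle _ _)).
rewrite /in_disc in Hz. change (Cmod z0 + Cmod (Cminus y z0) < 1). lra.
Qed.

Theorem lemma3p3 (n : nat) (K K' Cst : R) (u : 'I_n -> C -> C)
  (V : Cn n -> Prop) (phi : Cn n -> R) :
  K > 0 -> K' > 0 -> Cst > 0 ->
  tot_geod_isom_embedding K K' u ->
  open_Cn V -> (forall z, V z -> in_polydisc z) ->
  (exists zeta, in_disc zeta /\ V (fun a => u a zeta)) ->
  is_potential K V phi ->
  (forall z, V z -> norm_dphi2 K phi z <= Cst) ->
  (* (1) grad phi tangent to S = u(Delta) along S /\ V *)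
  (forall zeta, in_disc zeta -> V (fun a => u a zeta) ->
     exists lam : C, forall a,
       grad K phi (fun b => u b zeta) a = Cmult lam (C_derive (u a) zeta)) ->
  (* (2) |dphi|^2 = C on S /\ V *)
  (forall zeta, in_disc zeta -> V (fun a => u a zeta) ->
     norm_dphi2 K phi (fun b => u b zeta) = Cst) ->
  forall a : 'I_n, ~ (exists c : C, forall zeta, in_disc zeta -> u a zeta = c).
Proof.
move=> HK HK' HC _ Ho Hpd [z0 [Hz0 HVz0]] [Hs Hdd] Hle Hgrad Heq a0 [c Hc].
set p : Cn n := fun b => u b z0.
have Hp : V p by [].
have HCp : norm_dphi2 K phi p = Cst by apply: Heq.
have Hm : Cmod (p a0) < 1 by apply: (Hpd p Hp a0).
have Hm0 := Cmod_ge_0 (p a0).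
have Hm2 : (fst (p a0))^2 + (snd (p a0))^2 < 1.
  rewrite -Cmod2_alt. nra.
have HgP : 0 < gP K (p a0).
  rewrite /gP. apply: Rdiv_lt_0_compat; first lra.
  apply: Rmult_lt_0_compat => //. apply: pow_lt. nra.
have [Px0 Py0] : Dl [::(a0,false)] phi p = 0 /\ Dl [::(a0,true)] phi p = 0.
  have [lam Hlam] := Hgrad z0 Hz0 HVz0.
  have := Hlam a0. rewrite (const_deriv0 _ c z0 Hz0 (Hc)).
  rewrite /grad /dz /Cmult /Cconj /=.
  move=> E. have E1 := f_equal fst E. have E2 := f_equal snd E. simpl in E1, E2.
  have Hr : / gP K (p a0) <> 0 by apply: Rinv_neq_0_compat; lra.
  rewrite /Defs.Dx /Defs.Dy in E1 E2.
  split.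
  - have : Defs.D (a0, false) phi (fun b => u b z0) / 2 * / gP K (u a0 z0) = 0 by nra.
    move=> H. have := Rmult_integral _ _ H. rewrite /p. case; [lra|done].
  - have : Defs.D (a0, true) phi (fun b => u b z0) / 2 * / gP K (u a0 z0) = 0 by nra.
    move=> H. have := Rmult_integral _ _ H. rewrite /p. case; [lra|done].
have [del [Hdel HV]] := sl_open n V p a0 Ho Hp.
have HKn : K <> 0 by lra.
pose xx b := fst (p b). pose yy b := snd (p b).
pose ee b : R := if b == a0 then 1 else 0.
have Cx : forall b t, Cmod (sl p a0 t 0 b)^2 = (xx b + t * ee b)^2 + (yy b + t * 0)^2.
  move=> b t. rewrite /sl /upd /ee /xx /yy. case: eqP => [->|_]; rewrite Cmod2_alt /Re /Im /=; field.
have Cy : forall b t, Cmod (sl p a0 0 t b)^2 = (xx b + t * 0)^2 + (yy b + t * ee b)^2.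
  move=> b t. rewrite /sl /upd /ee /xx /yy. case: eqP => [->|_]; rewrite Cmod2_alt /Re /Im /=; field.
have Nx := dir_contra n K phi (fun t => sl p a0 t 0) xx yy ee (fun _ => 0) (a0,false) del HKn Hdel Cx
  (fun ls t Ht => line_x n V phi p a0 ls t 0 Hs (HV t 0 Ht ltac:(rewrite Rabs_R0; lra)))
  ltac:(move=> t Ht /=; rewrite sl00 HCp; apply: Hle; apply: HV => //; rewrite Rabs_R0; lra).
have Ny := dir_contra n K phi (fun t => sl p a0 0 t) xx yy (fun _ => 0) ee (a0,true) del HKn Hdel Cy
  (fun ls t Ht => line_y n V phi p a0 ls 0 t Hs (HV 0 t ltac:(rewrite Rabs_R0; lra) Ht))
  ltac:(move=> t Ht /=; rewrite sl00 HCp; apply: Hle; apply: HV => //; rewrite Rabs_R0; lra).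
rewrite sl00 in Nx. rewrite sl00 in Ny.
set Sx := \big[Rplus/0]_(b < n) _ in Nx.
set Sy := \big[Rplus/0]_(b < n) _ in Ny.
suff : 0 < Sx + Sy.
  case: (Rlt_or_le 0 Sx) => [/Nx //|H1]. case: (Rlt_or_le 0 Sy) => [/Ny //|H2]. lra.
rewrite /Sx /Sy -big_Rplus_split.
apply: (big_Rplus_pos _ _ a0).
- move=> b. case: (eqVneq b a0) => [->|Hb].
    apply: Rlt_le. rewrite /ee eqxx Px0 Py0 /xx /yy.
    apply: combo_self => //.
    have := Hdd p Hp a0 a0. rewrite eqxx /ddbar /Defs.Dx /Defs.Dy /=. case=> E1 _. lra.
  have Hdd0 : forall z, V z -> ddbar a0 b phi z = (0,0).
    move=> z Hz. rewrite (Hdd z Hz a0 b). by rewrite eq_sym (negbTE Hb).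
  have [H1 H2] := harm n V phi p a0 b Hs Ho Hp Hdd0.
  rewrite /ee (negbTE Hb).
  apply: combo_other => //; lra.
- rewrite /ee eqxx Px0 Py0 /xx /yy.
    apply: combo_self => //.
    have := Hdd p Hp a0 a0. rewrite eqxx /ddbar /Defs.Dx /Defs.Dy /=. case=> E1 _. lra.
Qed.
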